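(* Let $A\subseteq\mathbb{N}$ be a set whose natural density $\mathrm{dens}(A)$ exists and is positive, and let $m,\gamma$ be integers with $2\le\gamma<m$. Then for every $k\ge 1$, \[ \underline{\mathrm{dens}}\Big(A\cap \bigcup_{n\in R_k}\big([m^n,\gamma m^n]\cap\mathbb{N}\big)\Big)>0, \] where $R_k=\{2^{k-1}(2j+1): j\in\mathbb{N}_0\}$.
   Context: $\mathbb{N}=\{1,2,\dots\}$, $\mathbb{N}_0=\mathbb{N}\cup\{0\}$. For $A\subseteq\mathbb{N}$, $\underline{\mathrm{dens}}(A)=\liminf_{n\to\infty}\#(A\cap[1,n])/n$ and $\mathrm{dens}(A)=\lim_{n\to\infty}\#(A\cap[1,n])/n$ when this limit exists. Equivalently, $R_k=\{n\in\mathbb{N}: v_2(n)+1=k\}$ where $v_2$ is the $2$-adic valuation. *)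

(* Defs.v *)
From Stdlib Require Import Reals Arith ClassicalDescription.
From Coquelicot Require Import Coquelicot.
Open Scope R_scope.

(* Subsets of N = {1,2,...} are predicates on nat (0 is never counted). *)

Fixpoint count_upto (A : nat -> Prop) (n : nat) : nat :=
  match n with
  | O => O
  | S k => (count_upto A k + (if excluded_middle_informative (A (S k)) then 1 else 0))%nat
  end.

Definition dens_seq (A : nat -> Prop) (n : nat) : R :=
  INR (count_upto A n) / INR n.

Definition has_dens (A : nat -> Prop) (d : R) : Prop :=
  is_lim_seq (dens_seq A) d.

Definition lower_dens (A : nat -> Prop) : Rbar := LimInf_seq (dens_seq A).

Definition R_set (k : nat) (n : nat) : Prop :=
  exists j : nat, n = (2 ^ (k - 1) * (2 * j + 1))%nat.

Definition cut_set (A : nat -> Prop) (m gamma k : nat) (x : nat) : Prop :=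
  A x /\ exists n : nat, R_set k n /\ (m ^ n <= x)%nat /\ (x <= gamma * m ^ n)%nat.

(* Main.v *)
Require Import Defs.
From Stdlib Require Import Reals Arith Lia Lra Psatz ClassicalDescription.
From Coquelicot Require Import Coquelicot.
Open Scope R_scope.

Lemma count_mono (B : nat -> Prop) (a t : nat) :
  (count_upto B a <= count_upto B (a + t))%nat.
Proof.
  induction t as [|t IH].
  - rewrite Nat.add_0_r; lia.
  - replace (a + S t)%nat with (S (a + t)) by lia. simpl.
    destruct (excluded_middle_informative _); lia.
Qed.

Lemma count_trans (A B : nat -> Prop) (a t : nat) :
  (forall x, (a < x <= a + t)%nat -> A x -> B x) ->
  (count_upto A (a + t) + count_upto B a <= count_upto A a + count_upto B (a + t))%nat.
Proof.
  induction t as [|t IH]; intros H.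
  - rewrite Nat.add_0_r; lia.
  - replace (a + S t)%nat with (S (a + t)) by lia. simpl.
    assert (IH' := IH (fun x hx => H x ltac:(lia))).
    destruct (excluded_middle_informative (A (S (a + t)))) as [HA|HA];
    destruct (excluded_middle_informative (B (S (a + t)))) as [HB|HB]; try lia.
    exfalso; apply HB, H; [lia|exact HA].
Qed.

Lemma interval_find (f : nat -> nat) (N0 : nat) :
  forall t N, (f N0 <= N < f (N0 + t))%nat ->
  exists j, (N0 <= j)%nat /\ (f j <= N < f (S j))%nat.
Proof.
  induction t as [|t IH]; intros N HN.
  - rewrite Nat.add_0_r in HN; lia.
  - destruct (Nat.lt_ge_cases N (f (N0 + t)%nat)) as [H|H].
    + apply IH; lia.
    + exists (N0 + t)%nat; split; [lia|]. replace (S (N0 + t)) with (N0 + S t)%nat by lia. lia.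
Qed.

Theorem lemma2p2 (A : nat -> Prop) (d : R) (m gamma : nat)
  (hA0 : forall x, A x -> (1 <= x)%nat)
  (hd : has_dens A d) (hdpos : 0 < d)
  (hg : (2 <= gamma)%nat) (hgm : (gamma < m)%nat) :
  forall k : nat, (1 <= k)%nat ->
    Rbar_lt (Finite 0) (lower_dens (cut_set A m gamma k)).
Proof.
  intros k hk.
  set (L := (2 ^ (k - 1))%nat).
  assert (HL : (1 <= L)%nat) by (unfold L; pose proof (Nat.pow_nonzero 2 (k-1)); lia).
  set (C := cut_set A m gamma k).
  set (nj := fun j : nat => (L * (2 * j + 1))%nat).
  set (f := fun j : nat => (gamma * m ^ nj j)%nat).
  assert (Hd6 : 0 < d / 6) by lra.
  destruct (proj2 (is_lim_seq_spec _ _) hd (mkposreal _ Hd6)) as [N0 HN0].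
  simpl in HN0.
  assert (Hm1 : (1 < m)%nat) by lia.
  assert (Hg : 2 <= INR gamma) by (replace 2 with (INR 2) by (simpl; lra); apply le_INR; lia).
  assert (Key : forall j, (N0 <= j)%nat ->
     INR (count_upto C (f j)) >= d / 2 * INR (m ^ nj j)).
  { intros j hj.
    set (p := (m ^ nj j)%nat).
    assert (Hp : (N0 <= p)%nat).
    { pose proof (Nat.pow_gt_lin_r m (nj j) Hm1). unfold p, nj in *. nia. }
    assert (Hp1 : (1 <= p)%nat) by (unfold p; pose proof (Nat.pow_nonzero m (nj j)); lia).
    assert (E1 := HN0 p Hp).
    assert (E2 := HN0 (gamma * p)%nat ltac:(nia)).
    apply Rabs_def2 in E1. apply Rabs_def2 in E2.
    unfold dens_seq in E1, E2.
    assert (Hsub := count_trans A C p ((gamma - 1) * p)%nat).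
    replace (p + (gamma - 1) * p)%nat with (gamma * p)%nat in Hsub by nia.
    assert (Hsub' : (count_upto A (gamma * p) + count_upto C p <=
                     count_upto A p + count_upto C (gamma * p))%nat).
    { apply Hsub. intros x hx hAx. split; [exact hAx|].
      exists (nj j). split; [exists j; reflexivity|]. fold p. lia. }
    apply le_INR in Hsub'. rewrite !plus_INR in Hsub'.
    rewrite mult_INR in E2. unfold f. fold p.
    change (INR (count_upto C (gamma * p)) >= d / 2 * INR p).
    assert (HpR : 1 <= INR p) by (replace 1 with (INR 1) by (simpl; lra); apply le_INR; lia).
    set (a1 := INR (count_upto A p)) in *.
    set (a2 := INR (count_upto A (gamma * p))) in *.
    set (c1 := INR (count_upto C p)) in *.
    set (c2 := INR (count_upto C (gamma * p))) in *.
    set (P := INR p) in *. set (G := INR gamma) in *.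
    assert (Hc1 : 0 <= c1) by apply pos_INR.
    assert (Ha1 : a1 = a1 / P * P) by (field; lra).
    assert (Ha2 : a2 = a2 / (G * P) * (G * P)) by (field; lra).
    set (r1 := a1 / P) in *. set (r2 := a2 / (G * P)) in *.
    destruct E1 as [E1a E1b]. destruct E2 as [E2a E2b].
    assert (H1 : a1 < (d + d/6) * P) by (rewrite Ha1; apply Rmult_lt_compat_r; lra).
    assert (H2 : a2 > (d - d/6) * (G * P)) by (rewrite Ha2; apply Rmult_lt_compat_r; [nra|lra]).
    assert (H3 : d * P * G >= d * P * 2) by (apply Rle_ge, Rmult_le_compat_l; nra).
    nra. }
  set (M := (m ^ (2 * L))%nat).
  assert (HM : 1 <= INR M).
  { replace 1 with (INR 1) by (simpl; lra); apply le_INR. unfold M.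
    pose proof (Nat.pow_nonzero m (2*L)); lia. }
  set (delta := d / (2 * INR gamma * INR M)).
  assert (Hdelta : 0 < delta).
  { unfold delta. apply Rdiv_lt_0_compat; [lra|]. nra. }
  apply Rbar_lt_le_trans with (Finite delta); [exact Hdelta|].
  apply Rbar_le_trans with (LimInf_seq (fun _ => delta)).
  { rewrite LimInf_seq_const; apply Rbar_le_refl. }
  apply LimInf_le. exists (f N0). intros N hN.
  assert (Hfj : exists j, (N0 <= j)%nat /\ (f j <= N < f (S j))%nat).
  { apply (interval_find f N0 N N). split; [exact hN|].
    pose proof (Nat.pow_gt_lin_r m (nj (N0 + N)%nat) Hm1). unfold f, nj in *. nia. }
  destruct Hfj as [j [hj [hlo hhi]]].
  assert (Hfs : f (S j) = (f j * M)%nat).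
  { unfold f, nj, M. replace (L * (2 * S j + 1))%nat with (L * (2 * j + 1) + 2 * L)%nat by nia.
    rewrite Nat.pow_add_r. lia. }
  rewrite Hfs in hhi.
  pose proof (Key j hj) as Kj.
  pose proof (count_mono C (f j) (N - f j)) as Hmono.
  replace (f j + (N - f j))%nat with N in Hmono by lia.
  apply le_INR in Hmono.
  apply lt_INR in hhi. rewrite mult_INR in hhi.
  assert (Hfj' : f j = (gamma * m ^ nj j)%nat) by reflexivity.
  rewrite Hfj', mult_INR in hhi.
  unfold dens_seq. fold C.
  assert (HN1 : (1 <= N)%nat).
  { unfold f in hlo. pose proof (Nat.pow_nonzero m (nj j)). nia. }
  assert (HNR : 1 <= INR N) by (replace 1 with (INR 1) by (simpl; lra); apply le_INR; lia).
  set (cN := INR (count_upto C N)) in *.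
  set (cf := INR (count_upto C (f j))) in *.
  set (P := INR (m ^ nj j)) in *. set (G := INR gamma) in *. set (NR := INR N) in *.
  set (MR := INR M) in *.
  assert (Hq : cN = cN / NR * NR) by (field; lra).
  assert (HP0 : 0 < P).
  { unfold P. apply lt_0_INR. pose proof (Nat.pow_nonzero m (nj j)); lia. }
  assert (Hdl : delta * (2 * G * MR) = d) by (unfold delta; field; lra).
  set (q := cN / NR) in *.
  assert (delta * NR < delta * (G * P * MR)) by (apply Rmult_lt_compat_l; lra).
  nra.
Qed.
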